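(* Let $(G,\varphi)$ be a complex unit gain graph whose underlying graph $G$ has order $n$. Then $$2n-2c(G)-2\alpha(G)\le r(G,\varphi)\le 2n-2\alpha(G).$$
   Context: All graphs are simple and finite. A complex unit gain graph $(G,\varphi)$ consists of a simple graph $G$ with vertex set $\{v_1,\dots,v_n\}$ and a gain function $\varphi$ assigning to each oriented edge $e_{ij}$ (from $v_i$ to $v_j$, for each edge $v_iv_j$ of $G$) a complex number $\varphi(e_{ij})$ with $|\varphi(e_{ij})|=1$, such that $\varphi(e_{ji})=\varphi(e_{ij})^{-1}=\overline{\varphi(e_{ij})}$. Its adjacency matrix $A(G,\varphi)=(a_{ij})$ is the $n\times n$ Hermitian matrix with $a_{ij}=\varphi(e_{ij})$ if $v_i$ and $v_j$ are adjacent and $a_{ij}=0$ otherwise; $r(G,\varphi)$ denotes the rank of $A(G,\varphi)$. $\alpha(G)$ is the independence number of $G$ (the maximum size of a set of pairwise non-adjacent vertices), and $c(G)=|E(G)|-|V(G)|+\omega(G)$ is the cyclomatic number of $G$, where $\omega(G)$ is the number of connected components of $G$. *)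

(* Defs.v *)
From HB Require Import structures.
From mathcomp Require Import all_boot all_order all_algebra.
Set Implicit Arguments. Unset Strict Implicit. Unset Printing Implicit Defensive.
Import Order.TTheory GRing.Theory Num.Theory.
Local Open Scope ring_scope.

Definition simple_graph (n : nat) (e : rel 'I_n) : Prop :=
  symmetric e /\ irreflexive e.

Definition unit_gain (C : numClosedFieldType) (n : nat) (e : rel 'I_n)
  (phi : 'I_n -> 'I_n -> C) : Prop :=
  forall i j, e i j -> `|phi i j| = 1 /\ phi j i = (phi i j)^-1 /\ phi j i = (phi i j)^*.

Definition gain_adj (C : numClosedFieldType) (n : nat) (e : rel 'I_n)
  (phi : 'I_n -> 'I_n -> C) : 'M[C]_n :=
  \matrix_(i, j) (if e i j then phi i j else 0).

Definition independent (n : nat) (e : rel 'I_n) (S : {set 'I_n}) : bool :=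
  [forall x in S, forall y in S, ~~ e x y].

Definition indep_num (n : nat) (e : rel 'I_n) : nat :=
  \max_(S : {set 'I_n} | independent e S) #|S|.

Definition num_edges (n : nat) (e : rel 'I_n) : nat :=
  #|[set p : 'I_n * 'I_n | e p.1 p.2 && (p.1 < p.2)%N]|.

Definition num_comp (n : nat) (e : rel 'I_n) : nat := n_comp e predT.

Definition cyclomatic (n : nat) (e : rel 'I_n) : int :=
  (num_edges e)%:Z - n%:Z + (num_comp e)%:Z.

(* Main.v *)
Require Import Defs.
From HB Require Import structures.
From mathcomp Require Import all_boot all_order all_algebra.
From Stdlib Require Import Lia.
From mathcomp Require Import zify.
Set Implicit Arguments. Unset Strict Implicit. Unset Printing Implicit Defensive.
Import Order.TTheory GRing.Theory Num.Theory.

Section Comp.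
Variable T : finType.
Variable e : rel T.
Hypothesis sym_e : symmetric e.
Variable v : T.

Definition isol : rel T := [rel x y | e x y && (x != v) && (y != v)].

Lemma isol_sym : symmetric isol.
Proof. by move=> x y; rewrite /isol /= sym_e andbAC. Qed.

Definition N1 : {set T} := v |: [set y | e v y].

Lemma isol_path x :
  (forall y, y \in N1 -> ~~ connect isol x y) ->
  forall z, connect e x z -> connect isol x z.
Proof.
move=> Hx z /connectP [p pp ->].
have cxx : connect isol x x by [].
suff: forall w, path e w p -> connect isol x w -> connect isol x (last w p) by apply.
elim: p {pp cxx} => [|y p IH] w /=. by [].
move=> /andP [ewy pp] cxw.
apply: IH pp _; apply: (connect_trans cxw); apply: connect1.
rewrite /isol /= ewy /=.
have wv : w != v.
  by apply/eqP => wv; move: (Hx v); rewrite /N1 setU11 -wv cxw => /(_ isT).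
rewrite wv /=; apply/eqP => yv; subst y.
by move: (Hx w); rewrite /N1 !inE sym_e ewy orbT cxw => /(_ isT).
Qed.

Lemma comp_isol :
  n_comp isol predT + 1 <= n_comp e predT + #|[set fingraph.root isol x | x in N1]|.
Proof.
have csi := sym_connect_sym isol_sym.
have cse := sym_connect_sym sym_e.
set I := [set fingraph.root isol x | x in N1].
set R := [set x | roots isol x].
have -> : n_comp isol predT = #|R|.
  by apply: eq_card => x; rewrite !inE andbT.
have -> : n_comp e predT = #|[set x | roots e x]|.
  by apply: eq_card => x; rewrite !inE andbT.
rewrite -(cardsID I R).
have h1 : #|R :&: I| <= #|I| by apply: subset_leq_card; apply: subsetIr.
suff h2 : #|R :\: I| + 1 <= #|[set x | roots e x]| by lia.
have avoid : forall x, x \in R :\: I -> forall y, y \in N1 -> ~~ connect isol x y.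
  move=> x; rewrite !inE => /andP [xI /eqP rx] y yN; apply/negP => cxy.
  move: xI; apply/negP; rewrite negbK; apply/imsetP; exists y => //.
  by rewrite -{1}rx; apply/(fingraph.rootP csi).
have inj : {in R :\: I &, injective (fingraph.root e)}.
  move=> x1 x2 h1' h2' r12.
  have c12 : connect e x1 x2 by apply/(fingraph.rootP cse).
  have := isol_path (avoid _ h1') c12 => /(fingraph.rootP csi).
  by move: h1' h2'; rewrite !inE => /andP [_ /eqP ->] /andP [_ /eqP ->].
rewrite -(card_in_imset inj).
have vin : fingraph.root e v \in [set x | roots e x] by rewrite inE fingraph.roots_root.
rewrite (cardsD1 (fingraph.root e v) [set x | roots e x]) vin add1n addn1 ltnS.
apply: subset_leq_card; apply/subsetP => _ /imsetP [x xR ->].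
rewrite !inE fingraph.roots_root // andbT; apply/negP => /eqP /(fingraph.rootP cse) cxv.
have := isol_path (avoid _ xR) cxv.
by apply/negP; apply: avoid xR _ _; rewrite /N1 setU11.
Qed.

Definition deg := #|[set y | e v y]|.

Lemma cardN1 : irreflexive e -> #|N1| = deg.+1.
Proof.
move=> irr; rewrite /N1 cardsU1 inE irr /deg; done.
Qed.

Lemma comp_isol_gen : irreflexive e -> n_comp isol predT <= n_comp e predT + deg.
Proof.
move=> irr; have := comp_isol; have := leq_imset_card (fun x => fingraph.root isol x) N1.
rewrite cardN1 //; lia.
Qed.

Lemma comp_isol_cyc a b : irreflexive e -> a != b -> e v a -> e v b -> connect isol a b ->
  n_comp isol predT + 1 <= n_comp e predT + deg.
Proof.
move=> irr ab va vb cab.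
have csi := sym_connect_sym isol_sym.
have sub : [set fingraph.root isol x | x in N1] \subset
           [set fingraph.root isol x | x in N1 :\ a].
  apply/subsetP => _ /imsetP [x xN ->]; apply/imsetP.
  case: (eqVneq x a) => [-> | xa].
    exists b; first by rewrite /N1 !inE eq_sym ab vb orbT.
    exact/(fingraph.rootP csi).
  by exists x; rewrite ?in_setD1 ?xa ?xN.
have := subset_leq_card sub; have := leq_imset_card (fun x => fingraph.root isol x) (N1 :\ a).
have := comp_isol.
have aN : a \in N1 by rewrite /N1 !inE va orbT.
have h := cardsD1 a N1; rewrite aN in h; have := cardN1 irr; lia.
Qed.

End Comp.

Section Paths.
Variable T : finType.
Variable e : rel T.
Hypothesis sym_e : symmetric e.
Hypothesis irr_e : irreflexive e.

Lemma maxpath k x p : #|T| - size (x :: p) <= k -> path e x p -> uniq (x :: p) ->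
  exists x' s, [/\ path e x' s, uniq (x' :: s),
                 forall z, e x' z -> z \in s & size p <= size s].
Proof.
elim: k x p => [|k IH] x p hk pp up;
  (case: (boolP [exists z, e x z && (z \notin x :: p)]) => [/existsP [z /andP [exz zn]] | nz];
   last first); try (exists x, p; split => // z exz;
     have : z \in x :: p by [apply: contraR nz => zn; apply/existsP; exists z; rewrite exz zn];
     rewrite inE => /orP [/eqP zx|] //; by move: exz; rewrite zx irr_e).
- have u2 : uniq (z :: x :: p) by rewrite cons_uniq zn up.
  have := max_card (mem (z :: x :: p)); rewrite (card_uniqP u2) /=.
  move: hk => /=; lia.
- have [x' [s [pq uq nq sz]]] := IH z (x :: p) ltac:(move: hk => /=; lia)
     ltac:(by rewrite /= sym_e exz pp) ltac:(by rewrite cons_uniq zn up).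
  exists x', s; split => //; move: sz => /=; lia.
Qed.

Lemma dichotomy x y : e x y -> exists v, 0 < deg e v /\
  ((exists u, forall z, e u z = (z == v)) \/
   (exists a b, [/\ a != b, e v a, e v b & connect (isol e v) a b])).
Proof.
move=> exy.
have xy : x != y by apply/eqP => xy; move: exy; rewrite xy irr_e.
have [x' [s [pq uq nq sz]]] := maxpath (k := #|T|) (x := x) (p := [:: y])
  ltac:(lia) ltac:(by rewrite /= exy) ltac:(by rewrite /= inE xy).
move: pq uq nq sz; case: s => [|x1 rest] //.
move=> /= /andP [ex1 prest] /andP [xn urest] nq _.
case: (boolP [forall z, e x' z ==> (z == x1)]) => [/forallP hz | nz].
- exists x1; split.
    by apply/card_gt0P; exists x'; rewrite inE sym_e.
  left; exists x' => z; apply/idP/idP => [|/eqP ->] //; exact: (implyP (hz z)).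
- have [z] : exists z, ~~ (e x' z ==> (z == x1)).
    by apply/existsP; rewrite -negb_forall.
  rewrite negb_imply => /andP [exz zx1].
  exists x'; split.
    by apply/card_gt0P; exists x1; rewrite inE.
  right; exists x1, z; split => //; first by rewrite eq_sym.
  have zr : z \in rest by move: (nq z exz); rewrite inE (negbTE zx1).
  have zin : z \in x1 :: rest by rewrite inE zr orbT.
  apply: (path_connect (e := isol e x') _ zin).
  apply: (sub_in_path (P := predC1 x')) prest.
    move=> a b; rewrite !inE => ax bx eab; by rewrite /isol /= eab ax bx.
  apply/allP => w wi; rewrite inE; apply: contraNneq xn => <-; done.
Qed.
End Paths.

Section Edges.
Variable n : nat.
Variable e : rel 'I_n.
Hypothesis sym_e : symmetric e.
Hypothesis irr_e : irreflexive e.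
Variable v : 'I_n.

Lemma edges_isol : num_edges e = num_edges (isol e v) + deg e v.
Proof.
rewrite /num_edges.
set E := [set p : 'I_n * 'I_n | e p.1 p.2 && (p.1 < p.2)%N].
set B := [set p : 'I_n * 'I_n | (p.1 == v) || (p.2 == v)].
rewrite -(cardsID B E) addnC; congr (_ + _).
  apply: eq_card => -[a b]; rewrite !inE /isol /= negb_or.
  by case: (e a b); case: (a < b)%N; case: (a == v); case: (b == v).
pose g (y : 'I_n) := if (v < y)%N then (v, y) else (y, v).
have ginj : {in [set y | e v y] &, injective g}.
  move=> y1 y2; rewrite !inE /g => e1 e2.
  have n1 : y1 != v by apply: contraTneq e1 => ->; rewrite irr_e.
  have n2 : y2 != v by apply: contraTneq e2 => ->; rewrite irr_e.
  case: (ltnP v y1) => h1; case: (ltnP v y2) => h2 /eqP; rewrite xpair_eqE => /andP [/eqP a1 /eqP a2] //.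
  - by move: n2; rewrite -a1 eqxx.
  - by move: n1; rewrite a1 eqxx.
rewrite /deg -(card_in_imset ginj); apply: eq_card => -[a b].
rewrite !inE /=; apply/idP/imsetP => [|[y]].
  case/andP => /andP [eab ab] /orP [/eqP av|/eqP bv].
    by exists b; rewrite ?inE -?av // /g -av ab.
  exists a; first by rewrite inE sym_e -bv.
  by rewrite /g -bv ltnNge ltnW.
rewrite inE /g => evy; have nv : y != v by apply: contraTneq evy => ->; rewrite irr_e.
case: ltnP => h [-> ->] /=; first by rewrite evy h eqxx.
rewrite sym_e evy eqxx orbT andbT /=.
rewrite ltn_neqAle h andbT; move: nv; apply: contra => /eqP h'; apply/eqP; exact: val_inj.
Qed.

End Edges.

Section Indep.
Variable n : nat.
Variable e : rel 'I_n.

Lemma indep0 : independent e set0.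
Proof. by apply/forallP => x; rewrite inE. Qed.

Lemma indep_max : exists2 S, independent e S & #|S| = indep_num e.
Proof.
rewrite /indep_num (bigop.bigmax_eq_arg set0 indep0).
case: arg_maxnP => [|S PS _]; first exact: indep0.
by exists S.
Qed.

Lemma indep_le S : independent e S -> #|S| <= indep_num e.
Proof. by move=> h; apply: (bigop.leq_bigmax_cond S h). Qed.

Lemma indep_isol v : indep_num (isol e v) <= indep_num e + 1.
Proof.
apply/bigop.bigmax_leqP => S /forallP iS.
have : independent e (S :\ v).
  apply/forallP => x; apply/implyP => /setD1P [xv xS].
  apply/forallP => y; apply/implyP => /setD1P [yv yS].
  have := implyP (iS x) xS => /forallP /(_ y) /implyP /(_ yS).
  by rewrite /isol /= xv yv !andbT.
move/indep_le; have := cardsD1 v S; case: (v \in S) => /= -> h.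
  by rewrite add1n addn1 ltnS.
by rewrite add0n; apply: leq_trans h (leq_addr _ _).
Qed.

Lemma indep_noedge : (forall x y, ~~ e x y) -> n <= indep_num e.
Proof.
move=> h; have : independent e setT.
  by apply/forallP => x; apply/implyP => _; apply/forallP => y; apply/implyP => _.
by move/indep_le; rewrite cardsT card_ord.
Qed.

Lemma comp_noedge : (forall x y, ~~ e x y) -> n <= num_comp e.
Proof.
move=> h; rewrite /num_comp.
have -> : n_comp e predT = #|'I_n|.
  apply: eq_card => x; rewrite !inE andbT /roots.
  have := connect_root e x => /connectP [p pp ->].
  case: p pp => [|y p] /= pp; first by rewrite eqxx.
  by move: pp; rewrite (negbTE (h _ _)).
by rewrite card_ord.
Qed.

End Indep.

Local Open Scope ring_scope.

Section Mx.
Variable F : fieldType.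

Lemma rows_sub m p (M N : 'M[F]_(m, p)) (P : pred 'I_m) :
  (forall i j, M i j = if P i then N i j else 0) -> (M <= N)%MS.
Proof.
move=> h; apply/row_subP => i.
have -> : row i M = if P i then row i N else 0.
  by apply/rowP => j; rewrite !mxE h; case: (P i); rewrite ?mxE.
by case: (P i); rewrite ?row_sub ?sub0mx.
Qed.

Lemma rank_few_rows m p (M : 'M[F]_(m, p)) (T : {set 'I_m}) :
  (forall i j, i \notin T -> M i j = 0) -> (\rank M <= #|T|)%N.
Proof.
move=> h.
pose f : 'I_#|T| -> 'I_m := fun k => enum_val k.
have sub : (M <= rowsub f M)%MS.
  apply/row_subP => i; case: (boolP (i \in T)) => iT.
    rewrite -(enum_rankK_in iT iT) -row_rowsub; exact: row_sub.
  have -> : row i M = 0 by apply/rowP => j; rewrite !mxE h.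
  exact: sub0mx.
exact: leq_trans (mxrankS sub) (rank_leq_row _).
Qed.

Lemma zero_col_sub m p (U : 'M[F]_(m, p)) (w : 'rV[F]_p) k :
  (forall i, U i k = 0) -> (w <= U)%MS -> w 0 k = 0.
Proof.
move=> hU /submxP [D ->]; rewrite mxE big1 // => i _; by rewrite hU mulr0.
Qed.

Lemma addrow m p (U : 'M[F]_(m, p)) (w : 'rV[F]_p) k :
  (forall i, U i k = 0) -> w 0 k != 0 -> \rank (col_mx U w) = (\rank U).+1.
Proof.
move=> hU wk.
have -> : \rank (col_mx U w) = \rank (U + w)%MS by rewrite (addsmxE U w).
have w0 : w != 0 by apply: contraNneq wk => ->; rewrite mxE.
apply/eqP; rewrite eqn_leq; apply/andP; split.
  have := mxrank_adds_leqif U w; rewrite rank_rV w0 addn1 => h; exact: h.1.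
rewrite (ltn_leqif (mxrank_leqif_sup (addsmxSl U w))).
apply/negP => /(submx_trans (addsmxSr U w)) /(zero_col_sub hU) wk0.
by rewrite wk0 eqxx in wk.
Qed.

End Mx.


Section GMx.
Variable C : numClosedFieldType.
Variable n : nat.
Variable e : rel 'I_n.
Variable phi : 'I_n -> 'I_n -> C.

Lemma rank_isol v : (\rank (gain_adj (isol e v) phi) <= \rank (gain_adj e phi))%N.
Proof.
set A := gain_adj e phi; set A' := gain_adj (isol e v) phi.
pose X := \matrix_(i, j) (if i != v then A i j else 0).
have XA : (X <= A)%MS by apply: (rows_sub (P := fun i => i != v)) => i j; rewrite mxE.
have AX : (A'^T <= X^T)%MS.
  apply: (rows_sub (P := fun i => i != v)) => i j; rewrite !mxE.
  by rewrite /isol /=; case: (e j i); case: (i != v); case: (j != v).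
rewrite -(mxrank_tr A'); apply: leq_trans (mxrankS AX) _; rewrite mxrank_tr.
exact: mxrankS.
Qed.

Lemma rank_pendant u v : symmetric e -> irreflexive e -> unit_gain e phi ->
  (forall z, e u z = (z == v)) ->
  (\rank (gain_adj (isol e v) phi) + 2 <= \rank (gain_adj e phi))%N.
Proof.
move=> sym irr ug hu.
set A := gain_adj e phi; set A' := gain_adj (isol e v) phi.
have euv : e u v by rewrite hu.
have uv : u != v by apply: contraTneq euv => ->; rewrite irr.
have [a1 [a2 _]] := ug u v euv.
set a := phi u v.
have a0 : a != 0 by rewrite -normr_eq0 a1 oner_eq0.
have hi : forall i, e i u = (i == v) by move=> i; rewrite sym hu.
have Auj : forall j, A u j = if j == v then a else 0.
  by move=> j; rewrite !mxE hu; case: eqP => // ->.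
have Aiu : forall i, A i u = if i == v then phi v u else 0.
  by move=> i; rewrite !mxE hi; case: eqP => // ->.
set ru := row u A; set rv := row v A.
have r1 : \rank (col_mx A' ru) = (\rank A').+1.
  apply: (addrow (k := v)) => [i|]; first by rewrite !mxE /isol /= eqxx !andbF.
  by rewrite !mxE euv.
have r2 : \rank (col_mx (col_mx A' ru) rv) = (\rank (col_mx A' ru)).+1.
  apply: (addrow (k := u)) => [i|].
    rewrite -[i]splitK; case: (split i) => k /=.
      by rewrite col_mxEu !mxE /isol /= hi; case: (k == v); rewrite ?andbF.
    by rewrite col_mxEd !mxE irr.
  by rewrite !mxE sym euv a2 invr_eq0.
have sub : (col_mx (col_mx A' ru) rv <= A)%MS.
  rewrite !col_mx_sub !row_sub !andbT.
  apply/row_subP => i; case: (eqVneq i v) => [->|iv].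
    have -> : row v A' = 0 by apply/rowP => j; rewrite !mxE /isol /= eqxx andbF.
    exact: sub0mx.
  have -> : row i A' = row i A + (- (A i v / a)) *: ru.
    apply/rowP => j; rewrite !mxE /isol /= iv andbT.
    have := Auj j; rewrite /A /gain_adj !mxE => ->.
    case: (eqVneq j v) => [->|jv]; last by rewrite mulr0 addr0 andbT.
    by rewrite andbF mulNr divfK // subrr.
  by rewrite addmx_sub ?scalemx_sub ?row_sub.
by have := mxrankS sub; rewrite r2 r1 addn2.
Qed.

Lemma rank_upper : (\rank (gain_adj e phi) <= 2 * (n - indep_num e))%N.
Proof.
have [S iS cS] := indep_max e.
set A := gain_adj e phi.
pose A1 := \matrix_(i, j) (if i \in S then A i j else 0).
pose A2 := \matrix_(i, j) (if i \in S then 0 else A i j).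
have -> : A = A1 + A2.
  by apply/matrixP => i j; rewrite !mxE; case: (i \in S); rewrite ?addr0 ?add0r.
apply: leq_trans (mxrank_add _ _) _.
have h2 : (\rank A2 <= #|~: S|)%N.
  by apply: rank_few_rows => i j; rewrite inE negbK !mxE => ->.
have h1 : (\rank A1 <= #|~: S|)%N.
  rewrite -mxrank_tr; apply: rank_few_rows => i j; rewrite inE negbK !mxE => iS'.
  case: (boolP (j \in S)) => jS //.
  move/forallP: iS => /(_ j) /implyP /(_ jS) /forallP /(_ i) /implyP /(_ iS') /negbTE.
  by move=> ->.
have := cardsC S; rewrite card_ord -cS; lia.
Qed.
End GMx.

Section Main.
Variable C : numClosedFieldType.
Variable n : nat.
Variable phi : 'I_n -> 'I_n -> C.

Definition goodP (e : rel 'I_n) :=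
  (4 * n <= \rank (gain_adj e phi) + 2 * num_edges e + 2 * num_comp e + 2 * indep_num e)%N.

Lemma isol_ug (e : rel 'I_n) v : unit_gain e phi -> unit_gain (isol e v) phi.
Proof. by move=> ug i j /andP [/andP [eij _] _]; apply: ug. Qed.

Lemma isol_irr (e : rel 'I_n) v : irreflexive e -> irreflexive (isol e v).
Proof. by move=> irr x; rewrite /isol /= irr. Qed.

Lemma step (e : rel 'I_n) : symmetric e -> irreflexive e -> unit_gain e phi ->
  (forall e', symmetric e' -> irreflexive e' -> unit_gain e' phi ->
     (num_edges e' < num_edges e)%N -> goodP e') -> goodP e.
Proof.
move=> sym irr ug IH; rewrite /goodP.
case: (boolP [exists x, exists y, e x y]) => [/existsP [x /existsP [y exy]] | ne].
  have [v [dv hc]] := dichotomy sym irr exy.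
  have ed := edges_isol sym irr v.
  have IHv := IH (isol e v) (isol_sym sym v) (@isol_irr e v irr) (@isol_ug e v ug)
     ltac:(rewrite ed; lia).
  move: IHv; rewrite /goodP /num_comp.
  have hi := indep_isol e v.
  case: hc => [[u hu] | [a [b [ab va vb cab]]]].
    have hr := rank_pendant sym irr ug hu.
    have hc := comp_isol_gen sym v irr.
    lia.
  have hr := rank_isol e phi v.
  have hc := comp_isol_cyc sym irr ab va vb cab.
  lia.
have h : forall x y, ~~ e x y.
  by move=> x y; apply/negP => exy; apply: (negP ne); apply/existsP; exists x; apply/existsP; exists y.
have := indep_noedge h; have := comp_noedge h; lia.
Qed.

Lemma lower_main k (e : rel 'I_n) : (num_edges e <= k)%N -> symmetric e -> irreflexive e ->
  unit_gain e phi -> goodP e.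
Proof.
elim: k e => [|k IH] e hk sym irr ug; apply: step => // e' s' i' u' lt.
  by move: hk lt; lia.
by apply: IH => //; move: hk lt; lia.
Qed.

End Main.

Unset Implicit Arguments.
Theorem theorem1p1 (C : numClosedFieldType) (n : nat) (e : rel 'I_n)
  (phi : 'I_n -> 'I_n -> C) :
  simple_graph e -> unit_gain e phi ->
  (2 * n)%:Z - 2 * cyclomatic e - 2 * (indep_num e)%:Z <= (\rank (gain_adj e phi))%:Z
  /\ (\rank (gain_adj e phi))%:Z <= (2 * n)%:Z - 2 * (indep_num e)%:Z.
Proof.
move=> [sym irr] ug.
have hl := lower_main (leqnn _) sym irr ug.
have hu := rank_upper e phi.
have hin : (indep_num e <= n)%N.
  have [S _ <-] := indep_max e; rewrite -[X in (_ <= X)%N](card_ord n); exact: max_card.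
move: hl; rewrite /goodP /cyclomatic => hl.
split; lia.
Qed.
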